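(* Let $s>1$ be an integer and $k\in\{1,2,\ldots,s-1\}$. Then the indexed family $\{A_\varepsilon\colon \varepsilon\in I^s,\ |\varepsilon|=k\}$ defines a partition of $I^{s-1}$; that is, the union of its members is $I^{s-1}$ and $A_\varepsilon\cap A_\gamma=\emptyset$ whenever $\varepsilon\neq\gamma$ (the empty set is allowed as a member).
   Context: Let $I=\{0,1\}$ and for $\varepsilon\in I^s$ let $|\varepsilon|=\sum_i\varepsilon_i$. Let $\alpha=(0,\ldots,0)$ and $\omega=(1,\ldots,1)$ in $I^s$. For $\varepsilon\in I^s\setminus\{\alpha,\omega\}$ there is a unique index $i=t(\varepsilon)\in\{1,\ldots,s-1\}$ with $\varepsilon_i\neq\varepsilon_{i+1}=\varepsilon_{i+2}=\cdots=\varepsilon_s$, and one sets $A_\varepsilon=\{\varepsilon_1\}\times\cdots\times\{\varepsilon_i\}\times I^{s-1-i}\subseteq I^{s-1}$. (Note that if $1\leqslant|\varepsilon|\leqslant s-1$ then $\varepsilon\notin\{\alpha,\omega\}$.) *)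

(* Defs.v *)
(* I = {0,1} is modelled by bool (false = 0, true = 1);
   I^n is {ffun 'I_n -> bool}; coordinates are accessed 1-based via [coord]. *)
From mathcomp Require Import all_boot.
Set Implicit Arguments. Unset Strict Implicit. Unset Printing Implicit Defensive.

(* 1-based coordinate: coord e m = e_m for 1 <= m <= n (default false otherwise) *)
Definition coord (n : nat) (e : {ffun 'I_n -> bool}) (m : nat) : bool :=
  match @insub nat (fun j => j < n) _ m.-1 with
  | Some j => e j
  | None => false
  end.

Definition weight (n : nat) (e : {ffun 'I_n -> bool}) : nat :=
  \sum_(i < n) nat_of_bool (e i).

Definition is_t (s : nat) (e : {ffun 'I_s -> bool}) (i : nat) : Prop :=
  [/\ 1 <= i <= s - 1,
      coord e i != coord e i.+1
    & forall j, i.+1 <= j <= s -> coord e j = coord e i.+1].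

(* membership in A_e = {e_1} x ... x {e_{t(e)}} x I^{s-1-t(e)} ⊆ I^{s-1}
   (empty when t(e) is undefined, i.e. e ∈ {alpha, omega}) *)
Definition inA (s : nat) (e : {ffun 'I_s -> bool}) (x : {ffun 'I_(s - 1) -> bool})
  : Prop :=
  exists i, is_t e i /\ forall j, 1 <= j <= i -> coord x j = coord e j.

(* Main.v *)
Require Import Defs.
From mathcomp Require Import all_boot.
From mathcomp Require Import zify.

Lemma coord_ffun n (F : nat -> bool) m : 0 < m <= n ->
  coord [ffun a : 'I_n => F (val a)] m = F m.-1.
Proof.
move=> /andP [h1 h2]; rewrite /coord.
have hm : m.-1 < n by lia.
by rewrite insubT /= ffunE SubK.
Qed.

Lemma coordE n (e : {ffun 'I_n -> bool}) (a : 'I_n) : coord e a.+1 = e a.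
Proof.
have h : a.+1.-1 < n := ltn_ord a.
rewrite /coord insubT /=; congr (e _); exact: val_inj.
Qed.

Lemma weightE n (e : {ffun 'I_n -> bool}) :
  weight e = \sum_(0 <= a < n) coord e a.+1.
Proof.
by rewrite /weight big_mkord; apply: eq_bigr => a _; rewrite coordE.
Qed.

Lemma le_weight_eq n (e g : {ffun 'I_n -> bool}) :
  (forall a, e a ==> g a) -> weight e = weight g -> e = g.
Proof.
move=> H W; apply/ffunP => a.
have := H a; case ea: (e a); case ga: (g a) => //= _.
exfalso; move: W; rewrite /weight (bigD1 a) // (bigD1 a (F := fun i => nat_of_bool (g i))) //= ea ga.
have : \sum_(j < n | j != a) nat_of_bool (e j) <= \sum_(j < n | j != a) nat_of_bool (g j).
  apply: leq_sum => j _; have := H j; by case: (e j); case: (g j).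
move=> Hle /= Heq; rewrite add0n add1n in Heq; by rewrite Heq ltnn in Hle.
Qed.

Definition mk s (x : {ffun 'I_(s - 1) -> bool}) (i : nat) : {ffun 'I_s -> bool} :=
  [ffun a : 'I_s => (fun a : nat => if a < i then coord x a.+1 else ~~ coord x i) (val a)].

Lemma mk_coord s x i m : 0 < m <= s ->
  coord (@mk s x i) m = if m.-1 < i then coord x m.-1.+1 else ~~ coord x i.
Proof.
move=> hm; exact: (@coord_ffun s (fun a : nat => if a < i then coord x a.+1 else ~~ coord x i) m hm).
Qed.

Definition pp s (x : {ffun 'I_(s - 1) -> bool}) t := \sum_(0 <= a < t) nat_of_bool (coord x a.+1).
Arguments pp {s}.

Lemma mk_is_t s x i : 1 <= i <= s - 1 -> is_t (@mk s x i) i.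
Proof.
move=> hi; split => //.
- rewrite !mk_coord; try lia.
  have -> : i.-1 < i by lia.
  have -> : i.-1.+1 = i by lia.
  by rewrite ltnn; case: (coord x i).
- move=> j hj; rewrite !mk_coord; try lia.
  have -> : (j.-1 < i) = false by lia.
  by rewrite ltnn.
Qed.

Lemma mk_pref s x i : 1 <= i <= s - 1 -> forall j, 1 <= j <= i -> coord x j = coord (@mk s x i) j.
Proof.
move=> hi j hj; rewrite mk_coord; last lia.
have -> : j.-1 < i by lia.
by have -> : j.-1.+1 = j by lia.
Qed.

Lemma mk_weight s x i : 1 <= i <= s - 1 ->
  weight (@mk s x i) = pp x i + (s - i) * nat_of_bool (~~ coord x i).
Proof.
move=> hi; rewrite weightE (big_cat_nat (n := i)) /=; try lia.
congr (_ + _).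
  apply: eq_big_nat => a ha; rewrite mk_coord; last lia.
  by have -> : a.+1.-1 < i by lia.
rewrite (eq_big_nat _ _ (F2 := fun _ => nat_of_bool (~~ coord x i))).
  by rewrite sum_nat_const_nat.
move=> a ha; rewrite mk_coord; last lia.
by have -> : (a.+1.-1 < i) = false by lia.
Qed.

Lemma ppS s x t : pp x t.+1 = pp x t + nat_of_bool (@coord (s - 1) x t.+1).
Proof. by rewrite /pp big_nat_recr. Qed.

Lemma is_t_shape s (e : {ffun 'I_s -> bool}) (x : {ffun 'I_(s - 1) -> bool}) i :
  is_t e i -> (forall j, 1 <= j <= i -> coord x j = coord e j) ->
  forall j, 1 <= j <= s -> coord e j = if j <= i then coord x j else coord e i.+1.
Proof.
move=> [hi hne hc] hp j hj; case: ifP => hji.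
  by rewrite hp //; lia.
by apply: hc; lia.
Qed.

Theorem lemma1 (s k : nat) (hs : 1 < s) (hk : 1 <= k <= s - 1) :
  (forall x : {ffun 'I_(s - 1) -> bool},
      exists e : {ffun 'I_s -> bool}, weight e = k /\ inA e x) /\
  (forall e g : {ffun 'I_s -> bool}, weight e = k -> weight g = k -> e <> g ->
      forall x : {ffun 'I_(s - 1) -> bool}, ~ (inA e x /\ inA g x)).
Proof.
split.
- move=> x.
  have claim : forall t, t <= s - 1 ->
    (pp x t < k < pp x t + (s - t)) \/
    exists i, 1 <= i <= t /\ ((coord x i = true /\ pp x i = k) \/
                              (coord x i = false /\ pp x i + (s - i) = k)).
    elim => [|t IH] ht.
      left; rewrite /pp big_geq //; lia.
    have [h1|[i [hi H]]] := (IH (ltnW ht)); last first.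
      by right; exists i; split => //; lia.
    move/andP: h1 => [h2 h3].
    rewrite ppS; case hx: (coord x t.+1) => /=.
      case: (eqVneq (pp x t + 1) k) => hq.
        right; exists t.+1; split; first lia.
        by left; split => //; rewrite ppS hx.
      left; lia.
    case: (eqVneq (pp x t + (s - t.+1)) k) => hq.
      right; exists t.+1; split; first lia.
      by right; split => //; rewrite ppS hx /= addn0.
    left; lia.
  have [h1|[i [hi H]]] := claim (s - 1) (leqnn _).
    exfalso; lia.
  have hi' : 1 <= i <= s - 1 by lia.
  exists (@mk s x i); split.
  + rewrite mk_weight //; case: H => [[-> <-]|[-> <-]] /=; lia.
  + exists i; split; [exact: mk_is_t | move=> j hj; rewrite -mk_pref //].
- move=> e g we wg neq x [[i [ti pi]] [i' [ti' pi']]].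
  apply: neq.
  have Se := @is_t_shape _ _ _ _ ti pi; have Sg := @is_t_shape _ _ _ _ ti' pi'.
  clear pi pi' ti ti'.
  have gen : forall (e g : {ffun 'I_s -> bool}) i i',
      weight e = k -> weight g = k -> i <= i' ->
      (forall j, 1 <= j <= s -> coord e j = if j <= i then coord x j else coord e i.+1) ->
      (forall j, 1 <= j <= s -> coord g j = if j <= i' then coord x j else coord g i'.+1) ->
      e = g.
    clear Se Sg.
    move=> e1 g1 j1 j1' w1 w2 hle S1 S2.
    case c: (coord e1 j1.+1).
      apply/esym/le_weight_eq; last by rewrite w1 w2.
      move=> a; have ha : 0 < a.+1 <= s by rewrite ltn_ord.
      rewrite -(coordE _ e1 a) -(coordE _ g1 a) (S1 a.+1 ha) (S2 a.+1 ha).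
      case h: (a.+1 <= j1); last by rewrite c implybT.
      have -> : a.+1 <= j1' by lia.
      by rewrite implybb.
    apply: le_weight_eq; last by rewrite w1 w2.
    move=> a; have ha : 0 < a.+1 <= s by rewrite ltn_ord.
      rewrite -(coordE _ e1 a) -(coordE _ g1 a) (S1 a.+1 ha) (S2 a.+1 ha).
    case h: (a.+1 <= j1); last by rewrite c.
    have -> : a.+1 <= j1' by lia.
    by rewrite implybb.
  case: (leqP i i') => h.
    exact: (gen e g i i').
  by symmetry; apply: (gen g e i' i) => //; apply: ltnW.
Qed.
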